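(* There exists a three-dimensional complex solvmanifold $M=\Gamma\backslash G$ of type (3b) whose underlying compact smooth $6$-manifold carries a continuous family of complex structures (small deformations of the complex structure of $M$) that are not left-invariant, i.e. none of them is induced on $\Gamma\backslash G$ by a left-invariant complex structure on the real Lie group $G$.
   Context: A complex solvmanifold is a compact manifold $\Gamma\backslash G$ with $G$ a simply connected complex solvable Lie group and $\Gamma$ a lattice, with complex structure induced from $G$. Type (3) means $G=\mathbf{C}^2\rtimes\mathbf{C}$ with action $\phi(x)(y,z)=(e^{x}y,e^{-x}z)$; every lattice of such $G$ has the form $\Gamma=\Delta\rtimes\Lambda$ with $\Delta$ a lattice of $\mathbf{C}^2$ and $\Lambda$ a lattice of $\mathbf{C}$ generated over $\mathbf{Z}$ by $\lambda,\mu$. Type (3b) means additionally that $e^{\lambda}\in\mathbf{R}$ and $e^{\mu}\in\mathbf{R}$. A complex structure on $\Gamma\backslash G$ is called left-invariant if it is the quotient of a left-invariant (integrable) complex structure on the real Lie group $G$ (left-invariance implies it descends to $\Gamma\backslash G$). *)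

(* Defs.v *)
From HB Require Import structures.
From mathcomp Require Import all_boot all_order all_algebra.
From mathcomp Require Import all_classical all_reals all_analysis.
Set Implicit Arguments. Unset Strict Implicit. Unset Printing Implicit Defensive.
Import Order.TTheory GRing.Theory Num.Theory.
Import numFieldNormedType.Exports.
Local Open Scope ring_scope.

Section Solv.
Variable R : realType.

(* Points of G = C^3 in real coordinates
   (Re x, Im x, Re y, Im y, Re z, Im z), indices 0..5. *)
Definition pt := 'rV[R]_6.
Definition co (g : pt) (k : nat) : R := g ord0 (inord k).

Definition cexp (a b : R) : R * R := (expR a * cos b, expR a * sin b).

(* group law of G = C^2 ⋊_phi C, phi(x)(y,z) = (e^x y, e^{-x} z):
   (x,y,z)(x',y',z') = (x + x', y + e^x y', z + e^{-x} z') *)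
Definition gmul (g h : pt) : pt :=
  let E := cexp (co g 0) (co g 1) in
  let F := cexp (- co g 0) (- co g 1) in
  \row_(k < 6) nth 0
    [:: co g 0 + co h 0; co g 1 + co h 1;
        co g 2 + (E.1 * co h 2 - E.2 * co h 3);
        co g 3 + (E.1 * co h 3 + E.2 * co h 2);
        co g 4 + (F.1 * co h 4 - F.2 * co h 5);
        co g 5 + (F.1 * co h 5 + F.2 * co h 4)] k.

(* action phi(a1 + i a2) on C^2 = R^4 (coordinates Re y, Im y, Re z, Im z) *)
Definition phi4 (a1 a2 : R) (w : 'rV[R]_4) : 'rV[R]_4 :=
  let E := cexp a1 a2 in
  let F := cexp (- a1) (- a2) in
  let c k := w ord0 (inord k) in
  \row_(k < 4) nth 0
    [:: E.1 * c 0 - E.2 * c 1; E.1 * c 1 + E.2 * c 0;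
        F.1 * c 2 - F.2 * c 3; F.1 * c 3 + F.2 * c 2] k.

(* Lattice data: Λ = Z λ + Z μ ⊂ C (λ = l1 + i l2, μ = m1 + i m2), and
   Δ = Z^4 B ⊂ C^2 = R^4 (rows of the invertible matrix B), stable under
   phi(λ) and phi(μ). *)
Definition inLambda (l1 l2 m1 m2 a b : R) : Prop :=
  exists p q : int, a = p%:~R * l1 + q%:~R * m1 /\ b = p%:~R * l2 + q%:~R * m2.
Definition inDelta (B : 'M[R]_4) (w : 'rV[R]_4) : Prop :=
  exists n : 'rV[int]_4, w = map_mx intr n *m B.

Definition lattice_data (l1 l2 m1 m2 : R) (B : 'M[R]_4) : Prop :=
  [/\ l1 * m2 - l2 * m1 != 0, B \in unitmx &
      forall w, inDelta B w -> inDelta B (phi4 l1 l2 w) /\ inDelta B (phi4 m1 m2 w)].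

(* type (3b): e^λ and e^μ are real *)
Definition type3b (l1 l2 m1 m2 : R) : Prop := sin l2 = 0 /\ sin m2 = 0.

Definition inGamma (l1 l2 m1 m2 : R) (B : 'M[R]_4) (g : pt) : Prop :=
  inLambda l1 l2 m1 m2 (co g 0) (co g 1) /\
  inDelta B (\row_(k < 4) co g k.+2).

Definition e_ (j : 'I_6) : pt := delta_mx 0 j.
Fixpoint iter_dd (vs : seq pt) (f : pt -> R) : pt -> R :=
  match vs with
  | [::] => f
  | v :: vs' => fun x => 'D_v (iter_dd vs' f) x
  end.
Definition smooth (f : pt -> R) : Prop :=
  forall (vs : seq pt) (x : pt), differentiable (iter_dd vs f) x.
Definition pd (l : 'I_6) (f : pt -> R) : pt -> R := iter_dd [:: e_ l] f.

Definition Jac (f : pt -> pt) (x : pt) : 'M[R]_6 :=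
  \matrix_(k, j) pd j (fun y => f y ord0 k) x.

(* almost complex structures J : G -> M_6(R), J(x) acting on column vectors *)
Definition entry (J : pt -> 'M[R]_6) (i j : 'I_6) : pt -> R := fun x => J x i j.

Definition smooth_field (J : pt -> 'M[R]_6) : Prop :=
  forall i j, smooth (entry J i j).
Definition almost_complex (J : pt -> 'M[R]_6) : Prop :=
  forall x, J x *m J x = - 1%:M.
(* vanishing of the Nijenhuis tensor, in coordinates:
   N^k_{ij} = J^l_i d_l J^k_j - J^l_j d_l J^k_i - J^k_l (d_i J^l_j - d_j J^l_i) *)
Definition integrable (J : pt -> 'M[R]_6) : Prop :=
  forall (i j k : 'I_6) (x : pt),
    \sum_(l < 6) (J x l i * pd l (entry J k j) x - J x l j * pd l (entry J k i) x
                 - J x k l * (pd i (entry J l j) x - pd j (entry J l i) x)) = 0.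

Definition invariant_under (J : pt -> 'M[R]_6) (h : pt) : Prop :=
  forall g, J (gmul h g) *m Jac (gmul h) g = Jac (gmul h) g *m J g.

(* a complex structure on the smooth manifold Γ\G = a smooth, integrable,
   Γ-invariant almost complex structure on G *)
Definition complex_structure_on_quotient (Gam : pt -> Prop) (J : pt -> 'M[R]_6) :=
  [/\ smooth_field J, almost_complex J, integrable J &
      forall h, Gam h -> invariant_under J h].

Definition left_invariant (J : pt -> 'M[R]_6) : Prop :=
  forall h, invariant_under J h.

(* the complex structure of M = Γ\G induced by the complex structure of G = C^3 *)
Definition J0 : pt -> 'M[R]_6 := fun _ =>
  \matrix_(k, j)
    (if ~~ odd k && (j == k.+1 :> nat) then -1
     else if odd k && (k == j.+1 :> nat) then 1 else 0).

End Solv.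

(* Main.v *)
Require Import Defs.
From HB Require Import structures.
From mathcomp Require Import all_boot all_order all_algebra.
From mathcomp Require Import all_classical all_reals all_analysis.
From mathcomp Require Import Rstruct Rstruct_topology.
From mathcomp Require Import ring lra.
Import Order.TTheory GRing.Theory Num.Theory.
Import numFieldNormedType.Exports.
Local Open Scope ring_scope.
Local Notation RR := Rdefinitions.R.

Lemma derive_affine (f : pt RR -> RR) (a v : pt RR) (c : RR) :
  (forall h : RR, f (h *: v + a) = f a + h * c) -> iter_dd [:: v] f a = c.
Proof.
move=> H; rewrite /= /derive.
apply: cvg_lim; first exact: Rhausdorff.
apply: (@cvg_near_cst _ _ c _ _ (dnbhs_filter (0:RR))).
near=> h.
have hne0 : h != 0 by near: h; exact: nbhs_dnbhs_neq.
rewrite /= /shift H addrC addKr. change (h^-1 * (h * c) = c). by rewrite mulrA mulVf // mul1r.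
Unshelve. all: by end_near.
Qed.

Lemma iter_cst (vs : seq (pt RR)) (c : RR) :
  iter_dd vs (fun _ : pt RR => c) = fun _ => if vs is [::] then c else 0.
Proof.
elim: vs => [//|v vs IH] /=.
apply: funext => x.
have := @derive_affine (fun _ => if vs is [::] then c else 0) x v 0.
rewrite /= IH; apply=> h; by rewrite mulr0 addr0.
Qed.

Lemma smooth_cst (c : RR) : smooth (fun _ : pt RR => c).
Proof. move=> vs x; rewrite iter_cst; exact: differentiable_cst. Qed.

Lemma co_shift (y : pt RR) s (j : 'I_6) (i : nat) : (i < 6)%N ->
  co (s *: e_ RR j + y) i = co y i + s * (i == j)%:R.
Proof.
move=> Hi; rewrite /co /e_ !mxE eqxx /=.
have -> : (inord i == j) = (i == j) by rewrite -val_eqE /= inordK.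
by rewrite addrC mulr_natr.
Qed.

Definition dmx (e1 e2 f1 f2 : RR) (k j : nat) : RR :=
  match k with
  | 0 => (0 == j)%:R
  | 1 => (1 == j)%:R
  | 2 => e1 * (2 == j)%:R - e2 * (3 == j)%:R
  | 3 => e1 * (3 == j)%:R + e2 * (2 == j)%:R
  | 4 => f1 * (4 == j)%:R - f2 * (5 == j)%:R
  | _ => f1 * (5 == j)%:R + f2 * (4 == j)%:R
  end.
Definition Dmx e1 e2 f1 f2 : 'M[RR]_6 := \matrix_(k, j) dmx e1 e2 f1 f2 k j.
Definition Dm (h : pt RR) : 'M[RR]_6 :=
  Dmx (cexp (co h 0) (co h 1)).1 (cexp (co h 0) (co h 1)).2
      (cexp (- co h 0) (- co h 1)).1 (cexp (- co h 0) (- co h 1)).2.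

Lemma Jac_gmul (h g : pt RR) : Jac (gmul h) g = Dm h.
Proof.
apply/matrixP => k j; rewrite !mxE /pd.
apply: derive_affine => s.
rewrite !mxE.
case: k => [[|[|[|[|[|[|k]]]]]] Hk] //=; rewrite !co_shift //; try ring.
Qed.

Definition jm (t : RR) (k j : nat) : RR :=
  match k, j with
  | 0, 1 => -1 | 1, 0 => 1
  | 2, 2 => t | 2, 3 => -1 | 3, 2 => 1 + t ^+ 2 | 3, 3 => - t
  | 4, 5 => -1 | 5, 4 => 1
  | _, _ => 0 end.
Definition Jm (t : RR) : 'M[RR]_6 := \matrix_(k, j) jm t k j.

Lemma Jm0 x : Jm 0 = J0 (R:=RR) x.
Proof.
apply/matrixP => i j; rewrite !mxE.
case: i => [[|[|[|[|[|[|i]]]]]] Hi] //=; case: j => [[|[|[|[|[|[|j]]]]]] Hj] //=;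
  try ring.
Qed.

Lemma Jm_sq t : Jm t *m Jm t = - 1%:M.
Proof.
apply/matrixP => i j; rewrite !mxE !big_ord_recl !big_ord0 !mxE.
case: i => [[|[|[|[|[|[|i]]]]]] Hi] //=; case: j => [[|[|[|[|[|[|j]]]]]] Hj] //=;
  try ring.
Qed.

Lemma Jm_comm t e1 f1 : Jm t *m Dmx e1 0 f1 0 = Dmx e1 0 f1 0 *m Jm t.
Proof.
apply/matrixP => i j; rewrite !mxE !big_ord_recl !big_ord0 !mxE.
case: i => [[|[|[|[|[|[|i]]]]]] Hi] //=; case: j => [[|[|[|[|[|[|j]]]]]] Hj] //=;
  try ring.
Qed.

Lemma Jm_ncomm t e1 e2 f1 f2 : Jm t *m Dmx e1 e2 f1 f2 = Dmx e1 e2 f1 f2 *m Jm t ->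
  e2 * t ^+ 2 = 0.
Proof.
move=> /matrixP /(_ (inord 2) (inord 2)); rewrite !mxE !big_ord_recl !big_ord0 !mxE.
rewrite /= !inordK //= => H.
lra.
Qed.

Definition aa : RR := (3 + Num.sqrt 5) / 2.
Lemma s5 : Num.sqrt (5:RR) ^+ 2 = 5. Proof. by rewrite sqr_sqrtr. Qed.
Lemma s5p : 0 < Num.sqrt (5:RR). Proof. by rewrite sqrtr_gt0. Qed.
Lemma aa_gt1 : 1 < aa. Proof. have := s5p; rewrite /aa; lra. Qed.
Lemma aa_sq : aa ^+ 2 = 3 * aa - 1.
Proof. have := s5; rewrite /aa; lra. Qed.
Lemma aa_neq0 : aa != 0. Proof. have := aa_gt1; rewrite neq_lt => h; apply/orP; right; lra. Qed.
Lemma aa_inv : aa^-1 = 3 - aa.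
Proof.
have h : aa * (3 - aa) = 1 by have := aa_sq; lra.
by rewrite -(mulKf aa_neq0 (3 - aa)) h mulr1.
Qed.

Definition bm (i j : nat) : RR := match i, j with
  | 0, 0 => 1 | 0, 2 => 1 | 1, 0 => aa | 1, 2 => 3 - aa
  | 2, 1 => 1 | 2, 3 => 1 | 3, 1 => aa | 3, 3 => 3 - aa | _, _ => 0 end.
Definition Bm : 'M[RR]_4 := \matrix_(i, j) bm i j.
Definition dd : RR := (3 - 2 * aa)^-1.
Definition cm (i j : nat) : RR := match i, j with
  | 0, 0 => (3 - aa) * dd | 0, 1 => - dd | 2, 0 => - aa * dd | 2, 1 => dd
  | 1, 2 => (3 - aa) * dd | 1, 3 => - dd | 3, 2 => - aa * dd | 3, 3 => dd
  | _, _ => 0 end.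
Definition Cm : 'M[RR]_4 := \matrix_(i, j) cm i j.

Lemma Bm_unit : Bm \in unitmx.
Proof.
have hd : (3 - 2 * aa) * dd = 1.
  rewrite /dd mulfV //; have := s5p; rewrite /aa neq_lt => h; apply/orP; left; lra.
suff : Bm *m Cm = 1%:M by case/mulmx1_unit.
apply/matrixP => i j; rewrite !mxE !big_ord_recl !big_ord0 !mxE.
case: i => [[|[|[|[|i]]]] Hi] //=; case: j => [[|[|[|[|j]]]] Hj] //=; lra.
Qed.

Definition mm (i j : nat) : int := match i, j with
  | 0, 1 => 1 | 1, 0 => -1 | 1, 1 => 3 | 2, 3 => 1 | 3, 2 => -1 | 3, 3 => 3
  | _, _ => 0 end.
Definition Mz : 'M[int]_4 := \matrix_(i, j) mm i j.
Definition Pm : 'M[RR]_4 := \matrix_(i, j) if (i == j :> nat) then (if (i < 2)%N then aa else 3 - aa) else 0.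

Lemma BP : Bm *m Pm = map_mx intr Mz *m Bm.
Proof.
have h := aa_sq.
apply/matrixP => i j; rewrite !mxE !big_ord_recl !big_ord0 !mxE.
case: i => [[|[|[|[|i]]]] Hi] //=; case: j => [[|[|[|[|j]]]] Hj] //=; lra.
Qed.

Lemma sum4 (F : 'I_4 -> RR) :
  \sum_(l < 4) F l = F (inord 0) + F (inord 1) + F (inord 2) + F (inord 3).
Proof.
rewrite (eq_bigr (fun i : 'I_4 => F (inord i))) => [|i _]; last by rewrite inord_val.
by rewrite -(big_mkord xpredT (fun i => F (inord i))) /= !big_nat_recr //= big_geq // add0r.
Qed.

Lemma row4_eq (u v : 'rV[RR]_4) :
  (forall k, (k < 4)%N -> u ord0 (inord k) = v ord0 (inord k)) -> u = v.
Proof.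
move=> H; apply/rowP => k; have := H k (ltn_ord k); by rewrite inord_val.
Qed.

Lemma N2 : (2%R : nat) = 2%N. Proof. by []. Qed.
Lemma N3 : (3%R : nat) = 3%N. Proof. by []. Qed.

Lemma phi4_mu w : phi4 (ln aa) 0 w = w *m Pm.
Proof.
have ha : aa \is Num.pos by rewrite posrE; have := aa_gt1; lra.
rewrite /phi4 /cexp oppr0 cos0 sin0 expRN lnK // aa_inv.
apply: row4_eq => k hk; rewrite !mxE sum4 !mxE !inordK //.
rewrite ?N2 ?N3; rewrite ?N2 ?N3; case: k hk => [|[|[|[|k]]]] hk //=; ring.
Qed.

Lemma phi4_lam (w : 'rV[RR]_4) : phi4 0 (pi : RR) w = - w.
Proof.
have e0 : expR (0:RR) = 1 by exact: mathcomp.analysis.exp.expR0.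
rewrite /phi4 /cexp oppr0 e0 cosN sinN cospi sinpi oppr0.
apply: row4_eq => k hk; rewrite !mxE !inordK //.
rewrite ?N2 ?N3; case: k hk => [|[|[|[|k]]]] hk //=; ring.
Qed.

Lemma sin_intpi (p : int) : sin (p%:~R * (pi : RR)) = 0.
Proof.
have hn : forall n : nat, sin (n%:R * (pi : RR)) = 0.
  elim=> [|n IH]; first by rewrite mul0r sin0.
  by rewrite mulrSr mulrDl mul1r sinDpi IH oppr0.
case: p => n; first by rewrite -pmulrn hn.
by rewrite NegzE intrN mulNr sinN -pmulrn hn oppr0.
Qed.

Definition JJ (t : RR) : pt RR -> 'M[RR]_6 := fun _ => Jm t.

Definition jp (k j : nat) : {poly RR} :=
  match k, j with
  | 0, 1 => -1 | 1, 0 => 1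
  | 2, 2 => 'X | 2, 3 => -1 | 3, 2 => 1 + 'X ^+ 2 | 3, 3 => - 'X
  | 4, 5 => -1 | 5, 4 => 1
  | _, _ => 0 end.

Lemma jm_horner t k j : jm t k j = (jp k j).[t].
Proof.
case: k => [|[|[|[|[|[|k]]]]]]; case: j => [|[|[|[|[|[|j]]]]]];
  rewrite /= ?hornerE //.
Qed.

Lemma JJ_cont (vs : seq (pt RR)) (i j : 'I_6) (p : RR * pt RR) :
  {for p, continuous (fun q : RR * pt RR => iter_dd vs (entry (JJ q.1) i j) q.2)}.
Proof.
have -> : (fun q : RR * pt RR => iter_dd vs (entry (JJ q.1) i j) q.2) =
          fun q => if vs is [::] then (jp i j).[q.1] else 0.
  apply: funext => q; rewrite /entry /JJ iter_cst; case: vs => //.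
  by rewrite mxE jm_horner.
case: vs => [|v vs]; last exact: cst_continuous.
apply: (@continuous_comp _ _ _ fst (horner (jp i j))).
  exact: cvg_fst.
exact: continuous_horner.
Qed.

Lemma Jm_int t : Defs.integrable (JJ t).
Proof.
move=> i j k x; apply: big1 => l _.
have D : forall a b : 'I_6, pd a (entry (JJ t) k b) x = 0.
  by move=> a b; rewrite /pd /entry /JJ iter_cst.
have D' : forall a b c : 'I_6, pd a (entry (JJ t) b c) x = 0.
  by move=> a b c; rewrite /pd /entry /JJ iter_cst.
rewrite !D' !mulr0; ring.
Qed.

Definition h0 : pt RR := \row_(k < 6) (if k == 1 :> nat then pi / 2 else 0).

Theorem theorem4 :
  exists (l1 l2 m1 m2 : Rdefinitions.R) (B : 'M[Rdefinitions.R]_4),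
    lattice_data l1 l2 m1 m2 B /\ type3b l1 l2 m1 m2 /\
    exists (eps : Rdefinitions.R) (J : Rdefinitions.R -> pt Rdefinitions.R -> 'M[Rdefinitions.R]_6),
      [/\ 0 < eps,
          (forall t, `|t| < eps ->
             complex_structure_on_quotient (inGamma l1 l2 m1 m2 B) (J t)),
          J 0 = J0 (R:=Rdefinitions.R),
          (forall (vs : seq (pt Rdefinitions.R)) (i j : 'I_6)
                  (p : Rdefinitions.R * pt Rdefinitions.R),
             `|p.1| < eps ->
             {for p, continuous (fun q : Rdefinitions.R * pt Rdefinitions.R =>
                                   iter_dd vs (entry (J q.1) i j) q.2)}) &
          (forall t, 0 < `|t| < eps -> ~ left_invariant (J t))].
Proof.
have ha1 := aa_gt1.
exists 0, pi, (ln aa), 0, Bm; split; [|split; [|exists 1, JJ; split]].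
- split.
  + rewrite mul0r sub0r oppr_eq0 mulf_neq0 //.
      by rewrite gt_eqF // pi_gt0.
    by rewrite gt_eqF // ln_gt0.
  + exact: Bm_unit.
  + move=> w [n ->]; split.
      by exists (- n); rewrite phi4_lam map_mxN mulNmx.
    by exists (n *m Mz); rewrite phi4_mu map_mxM -!mulmxA BP.
- by rewrite /type3b sinpi sin0.
- by [].
- move=> t _; split.
  + move=> i j; exact: smooth_cst.
  + move=> x; exact: Jm_sq.
  + exact: Jm_int.
  + move=> h [[p [q [Hq Hp]]] _] g; rewrite Jac_gmul /JJ /Dm.
    have S : sin (co h 1) = 0 by rewrite Hp mulr0 addr0 sin_intpi.
    have E2 : (cexp (co h 0) (co h 1)).2 = 0 by rewrite /= S mulr0.
    have F2 : (cexp (- co h 0) (- co h 1)).2 = 0 by rewrite /= sinN S oppr0 mulr0.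
    rewrite E2 F2; exact: Jm_comm.
- by apply: funext => x; rewrite /JJ (Jm0 x).
- move=> vs i j p _; exact: JJ_cont.
- move=> t /andP [t0 _] Hinv.
  have := Hinv h0 0; rewrite Jac_gmul /JJ /Dm => /Jm_ncomm.
  have c1 : co h0 1 = pi / 2 by rewrite /co /h0 mxE inordK.
  have c0 : co h0 0 = 0 by rewrite /co /h0 mxE inordK.
  have e0 : expR (0:RR) = 1 by exact: mathcomp.analysis.exp.expR0.
  rewrite /= c0 c1 e0 sin_pihalf !mul1r => /eqP; rewrite sqrf_eq0 => /eqP t00.
  by move: t0; rewrite t00 normr0 ltxx.
Qed.
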